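(* Let $\mathcal{Z}=\langle c,G\rangle\subset\mathbb{R}^n$ be a zonotope, fix a reduction order for Girard reduction $\operatorname{GR}$, and let $P\in\mathbb{R}^{n\times n}$ be orthogonal. Then: (1) (Containment) $\mathcal{Z}\subseteq P\cdot\operatorname{GR}(P^\top\mathcal{Z})$. (2) (Volume bound) Let $G_{\mathrm{disc}}\in\mathbb{R}^{n\times m}$ be the submatrix of generators discarded by the reduction, $S=G_{\mathrm{disc}}G_{\mathrm{disc}}^\top$, and for orthogonal $P$ let $d(P)=|P^\top G_{\mathrm{disc}}|\mathbf{1}_m\in\mathbb{R}^n$ (entrywise absolute value), i.e. $d_i(P)=\|e_i^\top P^\top G_{\mathrm{disc}}\|_1$, and $\mathcal{B}(d(P))=\{x:|x_i|\le d_i(P)\ \forall i\}$ the corresponding axis-aligned box (the interval-hull term injected by Girard reduction in the rotated coordinates). Then $$\mathrm{vol}(\mathcal{B}(d(P)))=2^n\prod_{i=1}^n d_i(P)\le(2\sqrt m)^n\sqrt{\prod_{i=1}^n(P^\top SP)_{ii}},$$ and the right-hand side is minimized over all orthogonal $P$ by any PCA basis of $G_{\mathrm{disc}}$, i.e. any orthogonal $P$ for which $P^\top SP$ is diagonal.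
   Context: A zonotope is $\langle c,G\rangle=\{c+G\xi:\xi\in[-1,1]^p\}$ with $c\in\mathbb{R}^n$, $G\in\mathbb{R}^{n\times p}$; for a matrix $Q$, $Q\langle c,G\rangle=\langle Qc,QG\rangle$. Girard order reduction $\operatorname{GR}$ with target order $\rho$: given $\langle c,G\rangle$, keep the $\rho n-n$ columns of $G$ with largest Euclidean norm (index set $\mathcal{I}_{\mathrm{keep}}$), and replace the remaining (discarded) columns $\mathcal{I}_{\mathrm{disc}}$ by their axis-aligned interval hull with half-widths $d_i=\sum_{j\in\mathcal{I}_{\mathrm{disc}}}|G_{ij}|$; the result is $\operatorname{GR}(\langle c,G\rangle)=\langle c,[G_{:,\mathcal{I}_{\mathrm{keep}}},\mathrm{diag}(d)]\rangle$. It satisfies $\mathcal{Z}\subseteq\operatorname{GR}(\mathcal{Z})$. $\mathrm{vol}$ is Lebesgue volume, $\mathbf{1}_m$ the all-ones vector, $e_i$ the $i$-th standard basis vector. *)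

(* Defs.v *)
From mathcomp Require Import all_boot all_order all_algebra.
Set Implicit Arguments. Unset Strict Implicit. Unset Printing Implicit Defensive.
Import Order.TTheory GRing.Theory Num.Theory.
Local Open Scope ring_scope.

Section Zono.
Variable R : rcfType.

Definition in_zonotope n p (c : 'cV[R]_n) (G : 'M[R]_(n, p)) (x : 'cV[R]_n) : Prop :=
  exists xi : 'cV[R]_p, (forall j, `|xi j 0| <= 1) /\ x = c + G *m xi.

Definition orthogonal_mx n (P : 'M[R]_n) : Prop := P^T *m P = 1%:M.

Definition colnorm n p (G : 'M[R]_(n, p)) (j : 'I_p) : R :=
  Num.sqrt (\sum_(i < n) G i j ^+ 2).

Definition girard_keep n p (rho : nat) (G : 'M[R]_(n, p)) (K : {set 'I_p}) : Prop :=
  #|K| = minn p (rho * n - n) /\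
  (forall j j', j \in K -> j' \notin K -> colnorm G j' <= colnorm G j).

Definition colsub_set n p (G : 'M[R]_(n, p)) (A : {set 'I_p}) : 'M[R]_(n, #|A|) :=
  colsub (fun k : 'I_#|A| => enum_val k) G.

Definition ihull_halfwidths n p (G : 'M[R]_(n, p)) (K : {set 'I_p}) : 'rV[R]_n :=
  \row_i \sum_(j in ~: K) `|G i j|.

Definition girard_gens n p (G : 'M[R]_(n, p)) (K : {set 'I_p}) : 'M[R]_(n, #|K| + n) :=
  row_mx (colsub_set G K) (diag_mx (ihull_halfwidths G K)).

Definition dvec n m (P : 'M[R]_n) (Gd : 'M[R]_(n, m)) (i : 'I_n) : R :=
  \sum_(j < m) `|(P^T *m Gd) i j|.

Definition box_volume n (d : 'I_n -> R) : R := 2 ^+ n * \prod_(i < n) d i.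

Definition pca_bound n m (P : 'M[R]_n) (S : 'M[R]_n) : R :=
  (2 * Num.sqrt (m%:R)) ^+ n * Num.sqrt (\prod_(i < n) (P^T *m S *m P) i i).

End Zono.

(* Main.v *)
Require Import Defs.
From mathcomp Require Import all_boot all_order all_algebra.
From mathcomp Require Import ring lra.
Set Implicit Arguments. Unset Strict Implicit. Unset Printing Implicit Defensive.
Import Order.TTheory GRing.Theory Num.Theory.
Local Open Scope ring_scope.

Lemma gram_diag_ge0 (R : realDomainType) n m (B : 'M[R]_(n, m)) i :
  0 <= (B *m B^T) i i.
Proof. rewrite !mxE; apply: sumr_ge0 => k _; rewrite !mxE -expr2 sqr_ge0 //. Qed.

Lemma gram_col (R : ringType) m n (b : 'rV[R]_m) (B' : 'M_(n, m)) :
  col_mx b B' *m (col_mx b B')^T =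
  block_mx (b *m b^T) (b *m B'^T) (B' *m b^T) (B' *m B'^T).
Proof. by rewrite tr_col_mx mul_col_row. Qed.

Lemma prod_diag_block (R : comRingType) n (A : 'M[R]_1) (X : 'M_(1, n)) (Y : 'M_(n, 1)) (D : 'M_n) :
  \prod_(i < 1 + n) (block_mx A X Y D) i i = A 0 0 * \prod_(i < n) D i i.
Proof.
rewrite big_split_ord big_ord1 block_mxEul; congr (_ * _).
by apply: eq_bigr => i _; rewrite block_mxEdr.
Qed.

Lemma hadamard (R : realFieldType) m n (B : 'M[R]_(n, m)) :
  \det (B *m B^T) <= \prod_(i < n) (B *m B^T) i i.
Proof.
elim: n B => [|n IH] B; first by rewrite det_mx00 big_ord0.
have [b [B' ->]] : exists b : 'rV_m, exists B' : 'M_(n, m), B = col_mx b B'.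
  by exists (usubmx (B : 'M_(1 + n, m))), (dsubmx (B : 'M_(1 + n, m))); rewrite vsubmxK.
set a := (b *m b^T) 0 0.
have a_ge0 : 0 <= a by apply: gram_diag_ge0.
set k : 'cV_n := a^-1 *: (B' *m b^T).
set C : 'M_(n, m) := B' - k *m b.
have Cb : C *m b^T = 0.
  have [a0|an0] := eqVneq a 0.
    have b0 : b = 0.
      apply/matrixP => i j; rewrite !mxE (ord1 i).
      move: a0; rewrite /a !mxE => /eqP; rewrite psumr_eq0; last first.
        by move=> l _; rewrite !mxE -expr2 sqr_ge0.
      move=> /allP /(_ j (mem_index_enum _)); rewrite !mxE -expr2 sqrf_eq0 => /eqP //.
    by rewrite /C b0 trmx0 !mulmx0.
  rewrite /C mulmxBl -mulmxA [b *m b^T]mx11_scalar -/a mul_mx_scalar /k scalerA.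
  by rewrite mulfV // scale1r subrr.
have bC : b *m C^T = 0 by rewrite -(trmxK (b *m C^T)) trmx_mul trmxK Cb trmx0.
pose L : 'M_(1 + n) := block_mx 1%:M 0 (- k) 1%:M.
have LB : L *m col_mx b B' = col_mx b C.
  by rewrite mul_block_col !mul1mx mul0mx addr0 mulNmx addrC.
have detL : \det L = 1 by rewrite det_lblock !det1 mulr1.
have -> : \det (col_mx b B' *m (col_mx b B')^T) = a * \det (C *m C^T).
  have <- : \det (L *m (col_mx b B' *m (col_mx b B')^T) *m L^T) =
           \det (col_mx b B' *m (col_mx b B')^T).
    by rewrite !det_mulmx det_tr detL mul1r mulr1.
  have -> : L *m (col_mx b B' *m (col_mx b B')^T) *m L^T =
            (L *m col_mx b B') *m (L *m col_mx b B')^T.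
    by rewrite [in RHS]trmx_mul !mulmxA.
  by rewrite LB gram_col Cb bC det_lblock det_mx11.
apply: (le_trans (y := a * \prod_(i < n) (C *m C^T) i i)).
  by apply: ler_wpM2l => //; apply: IH.
rewrite gram_col prod_diag_block.
apply: ler_wpM2l => //.
apply: ler_prod => i _; rewrite gram_diag_ge0 /=.
have -> : C *m C^T = C *m B'^T.
  by rewrite /C [in X in C *m X]linearB /= trmx_mul mulmxBr mulmxA Cb mul0mx subr0.
rewrite /C mulmxBl -mulmxA mxE gerDl mxE oppr_le0 mxE big_ord1.
have -> : (b *m B'^T) 0 i = (B' *m b^T) i 0.
  by rewrite -[b]trmxK -trmx_mul trmxK mxE.
rewrite /k mxE -mulrA -expr2 mulr_ge0 // ?invr_ge0 // sqr_ge0 //.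
Qed.

Lemma cauchy_sq (R : rcfType) m (x : 'I_m -> R) :
  (\sum_j x j) ^+ 2 <= m%:R * \sum_j x j ^+ 2.
Proof.
have e1 : (\sum_j x j) ^+ 2 = \sum_j \sum_k (x j * x k).
  by rewrite expr2 big_distrl; apply: eq_bigr => j _; rewrite big_distrr.
have e2 : \sum_j \sum_k (x j ^+ 2 + x k ^+ 2) = 2 * (m%:R * \sum_j x j ^+ 2).
  rewrite (eq_bigr (fun j => x j ^+ 2 *+ m + \sum_k x k ^+ 2)); last first.
    by move=> j _; rewrite big_split /= sumr_const card_ord.
  rewrite big_split /= sumr_const card_ord sumrMnl.
  rewrite -[_ *+ m]mulr_natl.
  ring.
have : 2 * (\sum_j x j) ^+ 2 <= 2 * (m%:R * \sum_j x j ^+ 2).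
  rewrite -e2 e1 mulr_sumr; apply: ler_sum => j _.
  rewrite mulr_sumr; apply: ler_sum => k _.
  have h : x j ^+ 2 + x k ^+ 2 - 2 * (x j * x k) = (x j - x k) ^+ 2 by ring.
  by rewrite -subr_ge0 h sqr_ge0.
by rewrite ler_pM2l.
Qed.

Lemma cauchy_l1 (R : rcfType) m (a : 'I_m -> R) :
  (\sum_j `|a j|) ^+ 2 <= m%:R * \sum_j a j ^+ 2.
Proof.
have ea : forall j, a j ^+ 2 = `|a j| ^+ 2 by move=> j; rewrite real_normK // num_real.
under [X in _ <= _ * X]eq_bigr do rewrite ea.
exact: cauchy_sq.
Qed.

Lemma sqrt_prod (R : rcfType) n (f : 'I_n -> R) :
  (forall i, 0 <= f i) -> Num.sqrt (\prod_(i < n) f i) = \prod_(i < n) Num.sqrt (f i).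
Proof.
move=> f0; elim: n f f0 => [|n IH] f f0; first by rewrite !big_ord0 sqrtr1.
rewrite !big_ord_recr /= sqrtrM ?IH //.
by apply: prodr_ge0 => i _.
Qed.

Theorem lemma3p3 (R : rcfType) (n p rho : nat) (c : 'cV[R]_n) (G : 'M[R]_(n, p)) :
  (forall (P : 'M[R]_n) (K : {set 'I_p}),
     orthogonal_mx P -> girard_keep rho (P^T *m G) K ->
     forall x, in_zonotope c G x ->
       exists y, in_zonotope (P^T *m c) (girard_gens (P^T *m G) K) y /\ x = P *m y) /\
  (forall K : {set 'I_p}, girard_keep rho G K ->
     let Gd := colsub_set G (~: K) in
     let m := #|~: K| in
     let S := Gd *m Gd^T in
     (forall P : 'M[R]_n, orthogonal_mx P ->
        box_volume (dvec P Gd) = 2 ^+ n * \prod_(i < n) dvec P Gd i /\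
        box_volume (dvec P Gd) <= pca_bound m P S) /\
     (forall Q : 'M[R]_n, orthogonal_mx Q -> is_diag_mx (Q^T *m S *m Q) ->
        forall P : 'M[R]_n, orthogonal_mx P -> pca_bound m Q S <= pca_bound m P S)).
Proof.
split.
  move=> P K HP _ x [xi [Hxi ->]].
  have HP' : P *m P^T = 1%:M := mulmx1C HP.
  set H := P^T *m G.
  set d := ihull_halfwidths H K.
  pose v : 'cV_n := \col_i \sum_(j in ~: K) H i j * xi j 0.
  pose z1 : 'cV_#|K| := \col_k xi (enum_val k) 0.
  pose z2 : 'cV_n := \col_i (v i 0 / d 0 i).
  have dge0 : forall i, 0 <= d 0 i by move=> i; rewrite mxE sumr_ge0.
  have vle : forall i, `|v i 0| <= d 0 i.
    move=> i; rewrite !mxE; apply: le_trans (ler_norm_sum _ _ _) _.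
    apply: ler_sum => j _; rewrite normrM; apply: ler_piMr => //.
  have dv : forall i, d 0 i * (v i 0 / d 0 i) = v i 0.
    move=> i; have [d0|dn0] := eqVneq (d 0 i) 0.
      by move: (vle i); rewrite d0 normr_le0 => /eqP ->; rewrite mul0r.
    by rewrite mulrC -mulrA mulVf // mulr1.
  exists (P^T *m c + H *m xi); split; last by rewrite mulmxDr /H !mulmxA HP' !mul1mx.
  have zle : forall i, `|v i 0 / d 0 i| <= 1.
    move=> i; rewrite normrM normfV; have [d0|dn0] := eqVneq (d 0 i) 0.
      by rewrite d0 normr0 invr0 mulr0.
    have dpos : 0 < d 0 i by rewrite lt_def dn0 dge0.
    by rewrite (ger0_norm (dge0 i)) ler_pdivrMr // mul1r.
  exists (col_mx z1 z2); split.
    move=> j; rewrite -(splitK j); case: (split j) => k /=.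
      by rewrite col_mxEu mxE.
    by rewrite col_mxEd mxE.
  congr (_ + _).
  rewrite /girard_gens mul_row_col mul_diag_mx.
  have z2E : forall i, z2 i 0 = v i 0 / d 0 i by move=> i; rewrite /z2 mxE.
  have -> : \matrix_(i0, j0) (d 0 i0 * z2 i0 j0) = v.
    by apply/matrixP => i j; rewrite (ord1 j) mxE z2E dv.
  apply/matrixP => i j; rewrite (ord1 j) [in X in X = _]mxE.
  rewrite (bigID (mem K)) /=; rewrite mxE; congr (_ + _).
    rewrite mxE (big_enum_val (A := mem K) (fun j => H i j * xi j 0)) /=.
    by apply: eq_bigr => k _; rewrite !mxE.
  by rewrite mxE; apply: eq_bigl => l; rewrite in_setC.
move=> K _ Gd m S.
have eS : forall P : 'M[R]_n, P^T *m S *m P = (P^T *m Gd) *m (P^T *m Gd)^T.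
  by move=> P; rewrite trmx_mul trmxK /S !mulmxA.
have detS : forall P : 'M[R]_n, orthogonal_mx P -> \det (P^T *m S *m P) = \det S.
  move=> P HP; rewrite !det_mulmx mulrC mulrA -det_mulmx.
  by rewrite (mulmx1C HP) det1 mul1r.
split.
  move=> P HP; split => //.
  rewrite /box_volume /pca_bound exprMn -mulrA; apply: ler_wpM2l.
    by rewrite exprn_ge0.
  rewrite sqrt_prod; last by move=> i; rewrite eS gram_diag_ge0.
  have -> : Num.sqrt (m%:R : R) ^+ n = \prod_(i < n) Num.sqrt (m%:R : R).
    by rewrite prodr_const card_ord.
  rewrite -big_split /=.
  apply: ler_prod => i _; apply/andP; split.
    by rewrite /dvec sumr_ge0.
  rewrite -sqrtrM ?ler0n // eS.
  have dge0 : 0 <= dvec P Gd i by rewrite /dvec sumr_ge0.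
  rewrite -(ger0_norm dge0) -sqrtr_sqr; apply: ler_wsqrtr.
  rewrite /dvec mxE.
  have -> : \sum_j (P^T *m Gd) i j * (P^T *m Gd)^T j i = \sum_j (P^T *m Gd) i j ^+ 2.
    by apply: eq_bigr => j _; rewrite [_^T _ _]mxE expr2.
  exact: cauchy_l1.
move=> Q HQ HQd P HP.
rewrite /pca_bound; apply: ler_wpM2l.
  by rewrite exprn_ge0 // mulr_ge0 // sqrtr_ge0.
apply: ler_wsqrtr.
rewrite -(det_trig (is_diag_mx_is_trig HQd)) detS // -(detS P HP) eS.
exact: hadamard.
Qed.
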